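(* Let $N<M$ be positive integers and $p=1/M$. Let $k,\lambda$ be non-negative integers with $k+\lambda+1<M$. Then $$P_{\lambda}(A_{N,p}=k)=(\lambda+1)\binom{N}{k}p^k\bigl(1-(k+1+\lambda)p\bigr)^{N-k}(k+1+\lambda)^{k-1},$$ and $$P\bigl(A_{N,p}(T_\lambda(\omega))=k,\ Y_M(\omega)=0\bigr)=\lambda\binom{N}{k}p^k\bigl(1-(k+1+\lambda)p\bigr)^{N-k}(k+\lambda)^{k-1}.$$
   Context: A configuration $\omega$ of the $(N,p)$ BB space is an assignment to each neuron $j\in\{1,\dots,N\}$ of an energy level $E_j(\omega)\in\{1,\dots,M\}$ (equivalently a $0/1$ matrix $(a_{i,j})_{i\le M,j\le N}$ with exactly one $1$ in each column, $a_{i,j}=1$ iff $E_j=i$). Let $Y_i(\omega)=\#\{j: E_j(\omega)=i\}$. The avalanche size is $A_{N,p}(\omega)=\inf\{i\ge 0:\ \sum_{j=M-i}^{M}Y_j(\omega)\le i\}$. The uniform measure $P$ makes the levels $E_1,\dots,E_N$ i.i.d. uniform on $\{1,\dots,M\}$. For an integer $\lambda\ge0$, the map $T_\lambda$ on configurations is defined by: if $E_j(\omega)\ge M-\lambda$ then $E_j(T_\lambda(\omega))=M$; if $E_j(\omega)<M-\lambda$ then $E_j(T_\lambda(\omega))=E_j(\omega)+\lambda$. $P_\lambda$ is the pushforward of $P$ under $T_\lambda$. *)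

(* Defs.v *)
From mathcomp Require Import all_boot all_order all_algebra.
Set Implicit Arguments. Unset Strict Implicit. Unset Printing Implicit Defensive.
Import Order.TTheory GRing.Theory Num.Theory.

(* A configuration of the (N,p) BB space, p = 1/M: neuron j : 'I_N gets
   level (val (w j)).+1 in {1,..,M}. *)
Definition config (N M : nat) := {ffun 'I_N -> 'I_M}.

Definition level (N M : nat) (w : config N M) : 'I_N -> nat :=
  fun j => (val (w j)).+1.

Definition Ycount (N : nat) (E : 'I_N -> nat) (i : nat) : nat :=
  #|[pred j | E j == i]|.

(* A = inf { i >= 0 : sum_{j = M-i}^{M} Y_j <= i }.  The predicate always holds
   at i = N (the sum counts distinct neurons), so the inf is the first i in
   0..N satisfying it. *)
Definition aval_pred (N M : nat) (E : 'I_N -> nat) (i : nat) : bool :=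
  (\sum_(M - i <= j < M.+1) Ycount E j <= i)%N.

Definition avalanche (N M : nat) (E : 'I_N -> nat) : nat :=
  find (aval_pred M E) (iota 0 N.+1).

Definition Tlam (N M lam : nat) (E : 'I_N -> nat) : 'I_N -> nat :=
  fun j => if (M - lam <= E j)%N then M else (E j + lam)%N.

Definition Prob (N M : nat) (ev : pred (config N M)) : rat :=
  (#|ev|%:R / #|{: config N M}|%:R)%R.

(* Main.v *)
Require Import Defs.
From mathcomp Require Import all_boot all_order all_algebra zify ring lra.
Set Implicit Arguments. Unset Strict Implicit. Unset Printing Implicit Defensive.

Fixpoint cnt (S : seq nat) (n : nat) (f : seq nat -> nat) : nat :=
  match n with
  | 0 => f [::]
  | n'.+1 => \sum_(v <- S) cnt S n' (fun s => f (v :: s))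
  end.

Lemma cntS S n f : cnt S n.+1 f = \sum_(v <- S) cnt S n (fun s => f (v :: s)).
Proof. by []. Qed.

Lemma sum_split (S : seq nat) (r : pred nat) (F : nat -> nat) :
  \sum_(v <- S) F v = \sum_(v <- filter r S) F v + \sum_(v <- filter (predC r) S) F v.
Proof. by rewrite !big_filter [LHS](bigID r). Qed.

Lemma sum_seq_ext (S : seq nat) (F G : nat -> nat) :
  (forall v, v \in S -> F v = G v) -> \sum_(v <- S) F v = \sum_(v <- S) G v.
Proof. exact: eq_big_seq. Qed.

Lemma cnt_ext S n f g :
  (forall s, size s = n -> all (mem S) s -> f s = g s) -> cnt S n f = cnt S n g.
Proof.
elim: n f g => [|n IH] f g H /=; first exact: H.
apply: eq_big_seq => v vS; apply: IH => s Hs Hall.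
by apply: H => /=; rewrite ?Hs // vS Hall.
Qed.

Lemma cnt_perm S S' n f : perm_eq S S' -> cnt S n f = cnt S' n f.
Proof.
move=> pS; elim: n f => [|n IH] f //=.
rewrite (perm_big _ pS); apply: eq_bigr => v _; exact: IH.
Qed.

Lemma cnt_map g S n f : cnt (map g S) n f = cnt S n (fun s => f (map g s)).
Proof.
elim: n f => [|n IH] f //=; rewrite big_map; apply: eq_bigr => v _; exact: IH.
Qed.

Lemma cnt_const S n c : cnt S n (fun _ => c) = size S ^ n * c.
Proof.
elim: n => [|n IH] /=; first by rewrite mul1n.
under eq_bigr do rewrite IH.
rewrite big_const_seq count_predT iter_addn_0 expnS; lia.
Qed.

Lemma cnt_sum S n m (f : nat -> seq nat -> nat) :
  cnt S n (fun s => \sum_(a < m) f a s) = \sum_(a < m) cnt S n (f a).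
Proof.
elim: n f => [|n IH] f //=.
under eq_bigr do rewrite (IH (fun a s => f a (_ :: s))).
by rewrite exchange_big.
Qed.

Lemma cnt_split S n (r : pred nat) a (P Q : seq nat -> nat) :
  cnt S n (fun s => (count r s == a) * (P (filter r s) * Q (filter (predC r) s)))
  = 'C(n, a) * cnt (filter r S) a P * cnt (filter (predC r) S) (n - a) Q.
Proof.
elim: n a P Q => [|n IH] a P Q.
  by case: a => [|a] /=; rewrite ?bin0 ?mul1n ?bin0n ?mul0n.
rewrite (cntS S n) (sum_split _ r).
set rS := filter r S; set nS := filter (predC r) S.
case: a => [|a'].
  rewrite big1_seq ?add0n; last first.
    move=> v /= /[!mem_filter] /andP[rv _].
    rewrite (cnt_ext (g := fun _ => 0)) ?cnt_const ?muln0 // => s _ _ /=; by rewrite rv.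
  rewrite (sum_seq_ext (G := fun v => 'C(n, 0) * cnt rS 0 P * cnt nS (n - 0) (fun s => Q (v :: s)))); last first.
    move=> v; rewrite /rS /nS mem_filter => /andP[rv _]; rewrite -IH; apply: cnt_ext => s _ _.
    by rewrite /= (negbTE rv).
  by rewrite -big_distrr /= bin0 subn0.
rewrite (sum_seq_ext (G := fun v => 'C(n, a') * cnt rS a' (fun s => P (v :: s)) * cnt nS (n - a') Q)); last first.
  move=> v; rewrite /rS /nS mem_filter => /andP[rv _]; rewrite -IH; apply: cnt_ext => s _ _.
  by rewrite /= rv.
rewrite [X in _ + X](sum_seq_ext (G := fun v => 'C(n, a'.+1) * cnt rS a'.+1 P * cnt nS (n - a'.+1) (fun s => Q (v :: s)))); last first.
  move=> v; rewrite /rS /nS mem_filter => /andP[rv _]; rewrite -IH; apply: cnt_ext => s _ _.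
  by rewrite /= (negbTE rv).
have -> : \sum_(i <- rS) ('C(n, a') * cnt rS a' (fun s => P (i :: s)) * cnt nS (n - a') Q)
   = 'C(n,a') * cnt rS a'.+1 P * cnt nS (n - a') Q by rewrite -big_distrl -big_distrr.
have -> : \sum_(i <- nS) ('C(n, a'.+1) * cnt rS a'.+1 P * cnt nS (n - a'.+1) (fun s => Q (i :: s)))
   = 'C(n,a'.+1) * cnt rS a'.+1 P * \sum_(i <- nS) cnt nS (n - a'.+1) (fun s => Q (i :: s))
   by rewrite -big_distrr.
case: (ltnP a' n) => ha.
  rewrite -(cntS nS) subSS binS.
  have -> : n - a' = (n - a'.+1).+1 by lia.
  by rewrite !mulnDl addnC.
rewrite subSS (bin_small (n:=n) (m:=a'.+1)); last by lia.
have -> : n - a' = 0 by lia.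
by rewrite binS (bin_small (n:=n) (m:=a'.+1)) ?muln0 ?mul0n //; lia.
Qed.

Definition park x (s : seq nat) : bool :=
  all (fun i => i < count (fun v => v < i + x) s) (iota 0 (size s)).

Definition F n x := if n is m.+1 then x * (n + x) ^ m else 1.

Lemma count_lt_zero c s : 0 < c ->
  count (fun v => v < c) s = count (fun v => v == 0) s
    + count (fun u => u < c.-1) (map predn (filter (predC (fun v => v == 0)) s)).
Proof.
move=> hc; elim: s => [|v s IH] //=.
case: v => [|v] /=; rewrite IH ?hc //=; lia.
Qed.

Lemma park_decomp x' a s : count (fun v => v == 0) s = a ->
  park x'.+1 s = park (x' + a) (map predn (filter (predC (fun v => v == 0)) s)).
Proof.
move=> ha; rewrite /park size_map size_filter.
have hs : count (predC (fun v => v == 0)) s = size s - a.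
  by rewrite -ha -(count_predC (fun v => v == 0) s) addKn.
rewrite hs; set n := size s.
apply/allP/allP => H i; rewrite !mem_iota !add0n => /andP[_ hi].
  have hm : i + a \in iota 0 (size s) by rewrite mem_iota; apply/andP; split; lia.
  have := H _ hm.
  rewrite count_lt_zero ?addnS // ha /=.
  have -> : i + (x' + a) = i + a + x' by lia.
  lia.
have [hia|hia] := leqP a i; last first.
  by rewrite count_lt_zero ?addnS // ha addnC; apply: ltn_addl.
have hm : i - a \in iota 0 (size s - a) by rewrite mem_iota; apply/andP; split; lia.
have := H _ hm; move=> H1.
rewrite count_lt_zero ?addnS // ha /=.
have E : i - a + (x' + a) = i + x' by lia.
rewrite E in H1; move: H1; set c := count _ _; lia.
Qed.

Lemma binsum1 n B : \sum_(a < n.+1) 'C(n, a) * B ^ (n - a) = (B + 1) ^ n.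
Proof.
rewrite expnDn; apply: eq_bigr => a _; by rewrite exp1n muln1.
Qed.

Lemma binsum2 n B :
  \sum_(a < n.+2) a * 'C(n.+1, a) * B ^ (n.+1 - a) = n.+1 * (B + 1) ^ n.
Proof.
rewrite big_ord_recl /= mul0n add0n -binsum1 big_distrr /=.
apply: eq_bigr => a _; rewrite /bump /= add1n subSS -mul_bin_diag /=; lia.
Qed.

Lemma F_rec n x' : F n x'.+1 = \sum_(a < n.+1) 'C(n, a) * F (n - a) (x' + a).
Proof.
case: n => [|m]; first by rewrite big_ord1 /= mul1n.
set n := m.+1; set B := n + x'.
have hB : 0 < B by rewrite /B /n; lia.
apply/eqP; rewrite -(eqn_pmul2l hB); apply/eqP.
rewrite big_distrr /=.
have E : forall a : 'I_n.+1, B * ('C(n, a) * F (n - a) (x' + a))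
    = x' * ('C(n, a) * B ^ (n - a)) + a * 'C(n, a) * B ^ (n - a).
  move=> [a ha] /=.
  case: (ltnP a n) => han.
    have -> : n - a = (n - a).-1.+1 by lia.
    rewrite /F.
    have -> : (n - a).-1.+1 + (x' + a) = B by rewrite /B; lia.
    rewrite expnS; lia.
  have -> : a = n by lia.
  rewrite subnn /= /B; lia.
rewrite (eq_bigr _ (fun a _ => E a)) big_split /= -big_distrr /= binsum1 binsum2.
rewrite /F /n expnS. have -> : m.+1 + x'.+1 = B + 1 by rewrite /B /n; lia. rewrite /B /n; set P := (_ + 1) ^ m; nia.
Qed.

Lemma sum_pick m c (f : nat -> nat) : c < m ->
  \sum_(a < m) (c == a) * f a = f c.
Proof.
move=> hc; rewrite (bigD1 (Ordinal hc)) //= eqxx mul1n big1 ?addn0 // => a.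
by rewrite -val_eqE /= eq_sym => /negbTE ->.
Qed.

Lemma filter0_iota B : filter (fun v => v == 0) (iota 0 B.+1) = [:: 0].
Proof.
rewrite /= -(@eq_in_filter _ pred0) ?filter_pred0 // => v.
by rewrite mem_iota; case: v.
Qed.

Lemma filterS_iota B : filter (predC (fun v => v == 0)) (iota 0 B.+1) = map succn (iota 0 B).
Proof.
rewrite /= -(iotaDl 1 0) add1n; apply/all_filterP; apply/allP => v.
by rewrite mem_iota; case: v.
Qed.

Lemma predK_map t : map predn (map succn t) = t.
Proof. by elim: t => //= v t ->. Qed.

Lemma cnt_false S n f : (forall s, size s = n -> f s = 0) -> cnt S n f = 0.
Proof.
move=> H; rewrite (cnt_ext (g := fun _ => 0)) ?cnt_const ?muln0 // => s hs _; exact: H.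
Qed.

Lemma cnt_split2 S n (r : pred nat) a (P Q : seq nat -> nat) f :
  (forall s, f s = (count r s == a) * (P (filter r s) * Q (filter (predC r) s))) ->
  cnt S n f = 'C(n, a) * cnt (filter r S) a P * cnt (filter (predC r) S) (n - a) Q.
Proof. move=> H; rewrite -cnt_split; apply: cnt_ext => s _ _; exact: H. Qed.

Lemma park_cnt n x B : n + x <= B.+1 -> cnt (iota 0 B) n (park x) = F n x.
Proof.
elim/ltn_ind: n x B => n IHn x B.
case: n IHn => [|n] IHn hB; first by [].
elim: x B hB => [|x' IHx] B hB.
  rewrite cnt_false // => s hs; rewrite /park hs /= (@eq_count _ _ pred0) ?count_pred0 // => v; rewrite addn0 ltn0.
case: B hB => [|B'] hB; first lia.
rewrite (cnt_ext (g := fun s => \sum_(a < n.+2) (count (fun v => v == 0) s == a) *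
           (1 * park (x' + a) (map predn (filter (predC (fun v => v == 0)) s))))); last first.
  move=> s hs _; rewrite (@sum_pick _ _ (fun a => 1 * park (x' + a) (map predn (filter (predC (fun v => v == 0)) s)))) ?mul1n.
    by rewrite (@park_decomp x' _ s erefl).
  by rewrite -hs ltnS count_size.
rewrite (cnt_sum _ _ _ (fun a s => (count (fun v => v == 0) s == a) * (1 * park (x' + a) (map predn (filter (predC (fun v => v == 0)) s))))).
rewrite F_rec; apply: eq_bigr => [[a ha]] _.
rewrite (@cnt_split2 _ _ (fun v => v == 0) a (fun _ => 1) (fun t => park (x' + a) (map predn t))) //.
rewrite filter0_iota filterS_iota cnt_const cnt_map /= exp1n !mul1n.
rewrite (cnt_ext (g := park (x' + a))); last by move=> s _ _; rewrite predK_map.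
rewrite muln1; case: a ha => [|a] ha.
  by rewrite subn0 addn0 IHx //; lia.
rewrite IHn //; lia.
Qed.

Definition Cond x k (s : seq nat) : bool :=
  (count (fun d => d < k + x) s <= k) &&
  all (fun i => i < count (fun d => d < i + x) s) (iota 0 k).

Lemma count_filter_lt x k i s : i <= k ->
  count (fun d => d < i + x) (filter (fun d => d < k + x) s) = count (fun d => d < i + x) s.
Proof.
move=> hi; rewrite count_filter; apply: eq_count => d /=.
case h: (d < i + x) => //=; apply: (leq_trans h); lia.
Qed.

Lemma Cond_eq x k s : Cond x k s =
  (count (fun d => d < k + x) s == k) && park x (filter (fun d => d < k + x) s).
Proof.
rewrite /Cond /park size_filter.
have E : all (fun i => i < count (fun d => d < i + x) s) (iota 0 k) =
         all (fun i => i < count (fun d => d < i + x) (filter (fun d => d < k + x) s)) (iota 0 k).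
  apply: eq_in_all => i; rewrite mem_iota => /andP[_ hi].
  by rewrite count_filter_lt //; lia.
apply/idP/idP.
  move=> /andP[h1 h2].
  have hc : count (fun d => d < k + x) s = k.
    case: k h1 h2 {E} => [|k'] h1 h2; first by lia.
    have := allP h2 k' ltac:(rewrite mem_iota; lia).
    have := sub_count (a1 := fun d => d < k' + x) (a2 := fun d => d < k'.+1 + x)
       (fun d (h : d < k' + x) => leq_trans h (leq_add (leqnSn k') (leqnn x))) s.
    lia.
  by rewrite hc eqxx /= -E.
move=> /andP[/eqP h1 h2]; rewrite h1 leqnn /= E.
by move: h2; rewrite h1.
Qed.

Lemma filter_lt_iota c B : c <= B -> filter (fun d => d < c) (iota 0 B) = iota 0 c.
Proof.
move=> hc; rewrite -(subnKC hc) iotaD filter_cat add0n.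
have -> : filter (fun d => d < c) (iota 0 c) = iota 0 c.
  by apply/all_filterP/allP => d; rewrite mem_iota.
rewrite -[RHS]cats0; congr (_ ++ _).
rewrite -(@eq_in_filter _ pred0) ?filter_pred0 // => d; rewrite mem_iota /=; lia.
Qed.

Lemma size_filterC_lt c B : c <= B ->
  size (filter (predC (fun d => d < c)) (iota 0 B)) = B - c.
Proof.
move=> hc; rewrite size_filter.
have := count_predC (fun d => d < c) (iota 0 B).
rewrite -size_filter filter_lt_iota // !size_iota; lia.
Qed.

Lemma cond_cnt N x k B : k + x <= B ->
  cnt (iota 0 B) N (Cond x k) = 'C(N, k) * (B - (k + x)) ^ (N - k) * F k x.
Proof.
move=> hB.
rewrite (@cnt_split2 _ _ (fun d => d < k + x) k (park x) (fun _ => 1)); last first.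
  by move=> s; rewrite Cond_eq muln1 mulnb.
rewrite cnt_const size_filterC_lt // muln1 filter_lt_iota // park_cnt //; last by lia.
Qed.

Lemma card_as_sum (T : finType) (A : pred T) : #|A| = \sum_(t : T) (A t : nat).
Proof. rewrite -sum1_card big_mkcond /=; apply: eq_bigr => t _; by rewrite unfold_in; case: (A t). Qed.

Lemma sum_iota_ord M (G : nat -> nat) : \sum_(v <- iota 0 M) G v = \sum_(i < M) G i.
Proof. by rewrite -(big_mkord xpredT G) /index_iota subn0. Qed.

Lemma tuple_cnt M n (P : seq nat -> bool) :
  #|[pred t : n.-tuple 'I_M | P (map val t)]| = cnt (iota 0 M) n P.
Proof.
elim: n P => [|n IH] P.
  rewrite card_as_sum /=.
  rewrite (eq_bigr (fun _ => (P [::] : nat))); last by move=> t _; rewrite tuple0.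
  by rewrite sum_nat_const card_tuple expn0 mul1n.
rewrite card_as_sum.
rewrite (reindex (fun p : 'I_M * n.-tuple 'I_M => [tuple of p.1 :: p.2])) /=; last first.
  exists (fun t : n.+1.-tuple 'I_M => (thead t, [tuple of behead t])).
    by move=> [v t] _ /=; congr (_, _); apply: val_inj.
  by move=> t _; apply: val_inj => /=; rewrite [in RHS](tuple_eta t).
rewrite -(pair_big predT predT (fun v (t : n.-tuple 'I_M) => (P (val v :: map val t) : nat))) /=.
rewrite sum_iota_ord; apply: eq_bigr => v _; rewrite -IH card_as_sum //.
Qed.

Lemma ffun_cnt N M (P : seq nat -> bool) :
  #|[pred w : {ffun 'I_N -> 'I_M} | P [seq val (w n) | n <- enum 'I_N]]| = cnt (iota 0 M) N P.
Proof.
have -> : cnt (iota 0 M) N P = cnt (iota 0 M) #|'I_N| P by rewrite card_ord.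
rewrite -tuple_cnt -(cardsE [pred t : #|'I_N|.-tuple 'I_M | P (map val t)]).
rewrite -(@on_card_preimset _ _ (fun w : {ffun 'I_N -> 'I_M} => fgraph w)); last first.
  by exists (fun t => Finfun t) => [w _ | t _]; rewrite ?FinfunK ?fgraphK.
apply: eq_card => w; rewrite !inE /=.
by rewrite -codom_ffun codomE -map_comp.
Qed.

Lemma card_count (T : finType) (Q : pred T) : #|[pred x | Q x]| = count Q (enum T).
Proof. by rewrite card_as_sum -sumn_count sumnE big_map big_enum. Qed.

Lemma sum_ind m p a : \sum_(m <= j < p) ((a == j) : nat) = (m <= a < p).
Proof.
transitivity (count (fun j => a == j) (index_iota m p)).
  by rewrite -sumn_count sumnE big_map.
rewrite (@eq_count _ _ (pred1 a)); last by move=> j; rewrite /= eq_sym.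
rewrite count_uniq_mem ?iota_uniq // mem_iota.
case: (leqP m p) => h; first by rewrite subnKC.
have -> : p - m = 0 by lia.
rewrite addn0; case: (leqP m a) => //= ha; lia.
Qed.

Lemma find_char N (c : nat -> nat) k : c N <= N ->
  (find (fun i => c i <= i) (iota 0 N.+1) == k) = (c k <= k) && all (fun i => i < c i) (iota 0 k).
Proof.
move=> hN.
have hh : has (fun i => c i <= i) (iota 0 N.+1).
  by apply/hasP; exists N; rewrite // mem_iota /= add0n ltnSn.
have hj := hh; rewrite has_find size_iota in hj.
set j := find _ _ in hj *.
apply/eqP/andP.
  move=> <-; split.
    by have := nth_find 0 hh; rewrite -/j nth_iota.
  apply/allP => i; rewrite mem_iota /= => hi.
  have := before_find 0 hi; rewrite nth_iota ?add0n; last by apply: ltn_trans hj.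
  by move/negbT; rewrite -ltnNge.
move=> [hk hall].
have hkN : k <= N.
  rewrite leqNgt; apply/negP => hNk.
  by have := allP hall N; rewrite mem_iota /= hNk => /(_ isT); rewrite ltnNge hN.
case: (ltngtP j k) => // h.
  have := allP hall j; rewrite mem_iota /= h => /(_ isT).
  by have := nth_find 0 hh; rewrite -/j nth_iota // add0n ltnNge => ->.
have := before_find 0 h; rewrite nth_iota ?add0n ?hk //; lia.
Qed.

Definition ds N M (w : config N M) : seq nat := [seq M.-1 - val (w n) | n <- enum 'I_N].

Lemma size_ds N M (w : config N M) : size (ds w) = N.
Proof. by rewrite size_map size_enum_ord. Qed.

Lemma Tlam_le N M lam (w : config N M) n : Tlam M lam (level w) n <= M.
Proof.
rewrite /Tlam /level; have := ltn_ord (w n); case: ifP => //; lia.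
Qed.

Lemma aval_count N M lam (w : config N M) i :
  aval_pred M (Tlam M lam (level w)) i = (count (fun d => d < i + lam.+1) (ds w) <= i).
Proof.
rewrite /aval_pred /Ycount.
set E := Tlam M lam (level w).
have -> : \sum_(M - i <= j < M.+1) #|[pred n | E n == j]| = #|[pred n | M - i <= E n]|.
  rewrite card_as_sum; under eq_bigr do rewrite card_as_sum.
  rewrite exchange_big /=; apply: eq_bigr => n _.
  by rewrite sum_ind ltnS Tlam_le andbT.
rewrite card_count /ds count_map; congr (_ <= _); apply: eq_count => n /=.
rewrite /E /Tlam /level; have := ltn_ord (w n); case: ifP => /= h hM; lia.
Qed.

Lemma aval_eq N M lam k (w : config N M) :
  (avalanche M (Tlam M lam (level w)) == k) = Cond lam.+1 k (ds w).
Proof.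
rewrite /avalanche (eq_find (a2 := fun i => count (fun d => d < i + lam.+1) (ds w) <= i)); last first.
  by move=> i; rewrite aval_count.
rewrite find_char //.
by apply: (leq_trans (count_size _ _)); rewrite size_ds.
Qed.

Lemma Y_eq N M (w : config N M) : Ycount (level w) M = count (fun d => d == 0) (ds w).
Proof.
rewrite (_ : Ycount _ _ = count (fun j => level w j == M) (enum 'I_N)); last exact: card_count.
rewrite /ds [RHS]count_map; apply: eq_count => n /=.
rewrite /level; case: (w n) => v hv /=; lia.
Qed.

Lemma perm_rev_iota M : perm_eq (map (fun v => M.-1 - v) (iota 0 M)) (iota 0 M).
Proof.
apply: uniq_perm.
- rewrite map_inj_in_uniq ?iota_uniq // => u v; rewrite !mem_iota /= => hu hv; lia.
- exact: iota_uniq.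
move=> x; rewrite mem_iota /=; apply/mapP/idP.
  move=> [v]; rewrite mem_iota => hv ->; lia.
move=> hx; exists (M.-1 - x); rewrite ?mem_iota; lia.
Qed.

Lemma cnt_ds N M (P : seq nat -> bool) :
  #|[pred w : config N M | P (ds w)]| = cnt (iota 0 M) N P.
Proof.
rewrite (eq_card (B := [pred w : {ffun 'I_N -> 'I_M} |
   (fun s => P (map (fun v => M.-1 - v) s)) [seq val (w n) | n <- enum 'I_N]])); last first.
  by move=> w; rewrite !inE /ds -map_comp.
rewrite (ffun_cnt N M (fun s => P (map (fun v => M.-1 - v) s))) -(cnt_map (fun v => M.-1 - v) _ _ P).
exact: cnt_perm (perm_rev_iota M).
Qed.

Lemma count_succ c t : count (fun d => d < c.+1) (map succn t) = count (fun d => d < c) t.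
Proof. by rewrite count_map. Qed.

Lemma Cond_succ x k t : Cond x.+1 k (map succn t) = Cond x k t.
Proof.
rewrite /Cond addnS count_succ; congr andb; apply: eq_in_all => i _.
by rewrite addnS count_succ.
Qed.

Lemma filter_count0 (r : pred nat) s : count r s = 0 -> filter (predC r) s = s.
Proof.
move=> h; apply/all_filterP/allP => x xs /=.
apply/negP => rx; move/eqP: h; apply/negP; rewrite -lt0n -has_count.
by apply/hasP; exists x.
Qed.

Lemma cond2_cnt N M' lam k : k + lam <= M' ->
  cnt (iota 0 M'.+1) N (fun s => Cond lam.+1 k s && (count (fun d => d == 0) s == 0))
  = 'C(N, k) * (M' - (k + lam)) ^ (N - k) * F k lam.
Proof.
move=> hk.
rewrite (@cnt_split2 _ _ (fun d => d == 0) 0 (fun _ => 1) (Cond lam.+1 k)); last first.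
  move=> s; case: eqP => h /=; last by rewrite andbF.
  rewrite filter_count0 ?andbT ?mul1n //; exact: h.
rewrite bin0 cnt_const filterS_iota cnt_map subn0 /= !mul1n.
rewrite (cnt_ext (g := Cond lam k)); last by move=> s _ _; rewrite Cond_succ.
exact: cond_cnt.
Qed.

Import Order.TTheory GRing.Theory Num.Theory.
Local Open Scope ring_scope.

Theorem mainTheorem1 (N M k lam : nat)
  (hN : (0 < N)%N) (hNM : (N < M)%N) (hk : (k + lam + 1 < M)%N) :
  let p : rat := (M%:R)^-1 in
  Prob (fun w : config N M => avalanche M (Tlam M lam (level w)) == k)
    = (lam.+1)%:R * ('C(N, k))%:R * p ^+ k
      * (1 - (k + 1 + lam)%:R * p) ^+ (N - k)
      * ((k + 1 + lam)%:R) ^ (k%:Z - 1)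
  /\
  Prob (fun w : config N M =>
          (avalanche M (Tlam M lam (level w)) == k)
          && (Ycount (level w) M == 0%N))
    = ('C(N, k))%:R * p ^+ k
      * (1 - (k + 1 + lam)%:R * p) ^+ (N - k)
      * (if k == 0%N then 1 else lam%:R * ((k + lam)%:R) ^+ k.-1).
Proof.
move=> p.
have cardT : #|{: config N M}| = (M ^ N)%N by rewrite card_ffun !card_ord.
have E1 : Prob (fun w : config N M => avalanche M (Tlam M lam (level w)) == k)
    = ('C(N, k) * (M - (k + lam.+1)) ^ (N - k) * F k lam.+1)%N%:R / (M ^ N)%N%:R.
  rewrite /Prob cardT; congr (_%:R / _).
  rewrite -cond_cnt; last by lia.
  rewrite -cnt_ds; apply: eq_card => w; exact: aval_eq.
have [M' hM] : exists M', M = M'.+1 by exists M.-1; lia.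
have E2 : Prob (fun w : config N M => (avalanche M (Tlam M lam (level w)) == k)
          && (Ycount (level w) M == 0%N))
    = ('C(N, k) * (M' - (k + lam)) ^ (N - k) * F k lam)%N%:R / (M ^ N)%N%:R.
  rewrite /Prob cardT; congr (_%:R / _).
  rewrite -cond2_cnt; last by lia.
  rewrite -hM -cnt_ds; apply: eq_card => w.
  by rewrite inE -aval_eq -Y_eq.
rewrite E1 E2; clear E1 E2 cardT.
case: (leqP k N) => hkN; last first.
  by rewrite bin_small // !mul0n !mul0r !mulr0 !mul0r.
have [e he] : exists e, N = (k + e)%N by exists (N - k)%N; lia.
subst N; rewrite addKn.
have h1 : (M - (k + lam.+1) = M - (k + 1 + lam))%N by lia.
have h2 : (M' - (k + lam) = M - (k + 1 + lam))%N by lia.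
rewrite h1 h2 /p.
have hcM : (k + 1 + lam <= M)%N by lia.
have hm : M%:R != 0 :> rat by rewrite pnatr_eq0; lia.
have hcp : (k + 1 + lam)%:R != 0 :> rat by rewrite pnatr_eq0; lia.
have E3 : 1 - (k + 1 + lam)%:R * M%:R^-1 = (M - (k + 1 + lam))%N%:R / M%:R :> rat.
  by rewrite natrB //; field.
rewrite E3 !natrM !natrX expr_div_n exprD exprVn.
have hMk : M%:R ^+ k != 0 :> rat by rewrite expf_neq0.
have hMe : M%:R ^+ e != 0 :> rat by rewrite expf_neq0.
clear h1 h2 hk hNM hN hkN E3.
case: k hcM hcp hMk => [|k'] hcM hcp hMk.
  rewrite /= sub0r exprN1 !add0n add1n in hcp *.
  split; field; rewrite ?hMe ?andbT //.
  by rewrite addrC natr1.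
rewrite /= subzn // subn1 /= -exprnP in hcp *.
have -> : (k'.+1 + lam.+1 = k'.+1 + 1 + lam)%N by lia.
rewrite !natrM !natrX.
split; field; rewrite ?hMe ?hMk ?andbT //.
Qed.
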